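(* Let $q\ge1$, $\theta\in\mathbb R$, $n\in\{1,\dots,N\}$, and define on $I_n=(t_{n-1},t_n)$ the linear function $\varphi_n(t)=\theta-\lambda_n(t-t_{n-1})$ with $\lambda_n=\zeta_q/\tau_n$ and $\zeta_q=\frac{1}{4(2q+1)}$. Then for every $w\in\mathcal W_{h,\tau}^{p,q-1}$ and every $K\in\mathcal T_h$, $$\|(\mathrm{Id}-\Pi_{q-1}^t)(\varphi_nw)\|_{L^2(K\times I_n)}\le\zeta_q\|w\|_{L^2(K\times I_n)},$$ $$\|(\mathrm{Id}-\Pi_{q-1}^t)(\varphi_nw)(\cdot,t_{n-1}^+)\|_{L^2(\Omega)}\le\frac{1}{4\sqrt{2q+1}\sqrt{\tau_n}}\|w\|_{L^2(\Omega\times I_n)}=\frac{\sqrt{\lambda_n}}{2}\|w\|_{L^2(\Omega\times I_n)}.$$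
   Context: $\Omega\subset\mathbb R^d$ bounded polytopic; $\mathcal T_h$ a simplicial mesh of $\Omega$; $0=t_0<\dots<t_N=T$ a partition of $(0,T)$ with $I_n=(t_{n-1},t_n)$, $\tau_n=t_n-t_{n-1}$. $\mathcal V_h^p=\{v\in H^1_0(\Omega):v|_K\in\mathbb P^p(K)\ \forall K\}$ and $\mathcal W_{h,\tau}^{p,q-1}=\{w\in L^2(0,T;H^1_0(\Omega)):w|_{\Omega\times I_n}\in\mathbb P^{q-1}(I_n;\mathcal V_h^p)\ \forall n\}$. $\Pi_{q-1}^t$ denotes the $L^2$-orthogonal projection (in time) onto polynomials of degree at most $q-1$ on each interval $I_n$, applied pointwise in space; here it is applied to $\varphi_n w$ restricted to $\Omega\times I_n$. *)

(* Defs.v *)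
From HB Require Import structures.
From mathcomp Require Import all_boot all_order all_algebra.
From mathcomp Require Import all_classical all_reals all_analysis.
Set Implicit Arguments.
Unset Strict Implicit.
Unset Printing Implicit Defensive.
Import Order.TTheory GRing.Theory Num.Theory.
Import numFieldNormedType.Exports.
Local Open Scope classical_set_scope.
Local Open Scope ring_scope.

Section Defs.
Variable R : realType.

Definition Rd (d : nat) := g_sigma_algebraType (@open 'rV[R]_d).

(* mu is the d-dimensional Lebesgue measure (on Borel sets): it gives every
   closed box its volume.  This characterizes Lebesgue measure on Borel sets. *)
Definition is_lebesgue_Rd (d : nat) (mu : {measure set (Rd d) -> \bar R}) :=
  forall a b : 'I_d -> R, (forall i, a i <= b i) ->
    mu [set x : Rd d | forall i, a i <= (x : 'rV[R]_d) ord0 i <= b i]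
    = (\prod_(i < d) (b i - a i))%:E.

Definition conv (d : nat) (s : seq 'rV[R]_d) : set 'rV[R]_d :=
  [set x | exists l : 'I_(size s) -> R, (forall i, 0 <= l i) /\
     \sum_(i < size s) l i = 1 /\ x = \sum_(i < size s) l i *: nth 0 s i].

Definition verts (d : nat) (V : 'I_d.+1 -> 'rV[R]_d) : seq 'rV[R]_d :=
  [seq V i | i <- enum 'I_d.+1].

Definition simplex (d : nat) (V : 'I_d.+1 -> 'rV[R]_d) : set 'rV[R]_d :=
  conv (verts V).

Definition nondegenerate (d : nat) (V : 'I_d.+1 -> 'rV[R]_d) : Prop :=
  \det (\matrix_(i < d, j < d) (V (lift ord0 i) - V ord0) ord0 j) != 0.

Definition V0 (d : nat) : 'I_d.+1 -> 'rV[R]_d := fun _ => 0.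

Definition elt (d : nat) (Th : seq ('I_d.+1 -> 'rV[R]_d)) (k : nat) :=
  simplex (nth (@V0 d) Th k).

Definition simplicial_mesh (d : nat) (Omega : set 'rV[R]_d)
    (Th : seq ('I_d.+1 -> 'rV[R]_d)) : Prop :=
  [/\ (forall k, (k < size Th)%N -> nondegenerate (nth (@V0 d) Th k)),
      closure Omega = [set x | exists2 k, (k < size Th)%N & elt Th k x],
      (forall k l, (k < size Th)%N -> (l < size Th)%N -> k <> l ->
         interior (elt Th k) `&` interior (elt Th l) = set0) &
      (forall k l, (k < size Th)%N -> (l < size Th)%N -> k <> l ->
         exists S : seq 'rV[R]_d,
           (forall y, y \in S -> (y \in verts (nth (@V0 d) Th k)) &&
                                 (y \in verts (nth (@V0 d) Th l))) /\
           elt Th k `&` elt Th l = conv S)].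

Definition bounded_domain (d : nat) (Omega : set 'rV[R]_d) : Prop :=
  open Omega /\ exists M : R, forall x, Omega x -> `|x| <= M.

Definition poly_le (d p : nat) (P : 'rV[R]_d -> R) : Prop :=
  exists (m : nat) (c : 'I_m -> R) (e : 'I_m -> 'I_d -> nat),
    (forall k, (\sum_(i < d) e k i <= p)%N) /\
    forall x, P x = \sum_(k < m) c k * \prod_(i < d) (x ord0 i) ^+ (e k i).

(* V_h^p : continuous piecewise P^p functions vanishing on the boundary
   (= the H^1_0(Omega) piecewise-P^p functions on the conforming mesh) *)
Definition inVh (d : nat) (Omega : set 'rV[R]_d)
    (Th : seq ('I_d.+1 -> 'rV[R]_d)) (p : nat) (v : 'rV[R]_d -> R) : Prop :=
  [/\ {within closure Omega, continuous v},
      (forall x, (closure Omega `\` Omega) x -> v x = 0) &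
      (forall k, (k < size Th)%N ->
         exists P, poly_le p P /\ forall x, elt Th k x -> v x = P x)].

Definition inW (d : nat) (Omega : set 'rV[R]_d)
    (Th : seq ('I_d.+1 -> 'rV[R]_d)) (p q N : nat) (t : nat -> R)
    (w : 'rV[R]_d -> R -> R) : Prop :=
  forall m, (1 <= m <= N)%N ->
    exists v : 'I_q -> 'rV[R]_d -> R,
      (forall j, inVh Omega Th p (v j)) /\
      forall x s, t m.-1 < s < t m ->
        w x s = \sum_(j < q) v j x * s ^+ j.

(* L^2(a,b)-orthogonal projection onto polynomials of degree <= q-1 *)
Definition projP (q : nat) (a b : R) (g : R -> R) : {poly R} :=
  xget 0 [set P : {poly R} | (size P <= q)%N /\
    forall r : {poly R}, (size r <= q)%N ->
      (\int[@lebesgue_measure R]_(s in `]a, b[) ((g s - P.[s]) * r.[s])%:E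
         = 0)%E].

(* (Id - Pi_{q-1}^t)(f) on Omega x (a,b), with Pi applied pointwise in space *)
Definition resid (d q : nat) (a b : R) (f : 'rV[R]_d -> R -> R)
    (x : 'rV[R]_d) (s : R) : R :=
  f x s - (projP q a b (f x)).[s].

Definition trace_right (d : nat) (g : 'rV[R]_d -> R -> R) (a : R)
    (x : 'rV[R]_d) : R :=
  lim (g x s @[s --> a^'+]).

Definition L2norm_KI (d : nat) (mu : {measure set (Rd d) -> \bar R})
    (K : set 'rV[R]_d) (a b : R) (f : 'rV[R]_d -> R -> R) : \bar R :=
  ((\int[mu]_(x in (K : set (Rd d)))
      \int[@lebesgue_measure R]_(s in `]a, b[) ((f x s) ^+ 2)%:E) `^ 2^-1)%E.

Definition L2norm (d : nat) (mu : {measure set (Rd d) -> \bar R})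
    (D : set 'rV[R]_d) (g : 'rV[R]_d -> R) : \bar R :=
  ((\int[mu]_(x in (D : set (Rd d))) ((g x) ^+ 2)%:E) `^ 2^-1)%E.

Definition zeta (q : nat) : R := 1 / (4 * (2 * q%:R + 1)).

End Defs.

(* Main.v *)
Require Import Defs.
From HB Require Import structures.
From mathcomp Require Import all_boot all_order all_algebra.
From mathcomp Require Import all_classical all_reals all_analysis.
From mathcomp Require Import ring lra zify.
Import Order.TTheory GRing.Theory Num.Theory.
Import numFieldNormedType.Exports.
Local Open Scope classical_set_scope.
Local Open Scope ring_scope.

Set Implicit Arguments.
Unset Strict Implicit.
Unset Printing Implicit Defensive.

Section Alg.
Variable R : realType.
Implicit Types p F G h u v : {poly R}.

Definition prim p : {poly R} :=
  \poly_(i < (size p).+1) (if i is j.+1 then p`_j / (j.+1)%:R else 0).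

Lemma coef_prim0 p : (prim p)`_0 = 0.
Proof. by rewrite coef_poly. Qed.

Lemma coef_primS p i : (prim p)`_i.+1 = p`_i / (i.+1)%:R.
Proof.
rewrite coef_poly ltnS; case: ltnP => // H.
by rewrite nth_default // mul0r.
Qed.

Lemma primD p1 p2 : prim (p1 + p2) = prim p1 + prim p2.
Proof.
apply/polyP => -[|i]; rewrite coefD ?coef_prim0 ?addr0 // !coef_primS coefD.
by rewrite mulrDl.
Qed.

Lemma primZ c p : prim (c *: p) = c *: prim p.
Proof.
apply/polyP => -[|i]; rewrite coefZ ?coef_prim0 ?mulr0 // !coef_primS coefZ.
by rewrite mulrA.
Qed.

Lemma prim_deriv F : prim (F^`()) = F - (F`_0)%:P.
Proof.
apply/polyP => -[|i]; rewrite coefB coefC /=.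
  by rewrite coef_prim0 subrr.
rewrite coef_primS coef_deriv /=. rewrite subr0 -[_ *+ i.+1]mulr_natr mulfK //.
Qed.

Lemma deriv_prim p : (prim p)^`() = p.
Proof.
apply/polyP => i; rewrite coef_deriv coef_primS -[_ *+ i.+1]mulr_natr mulfVK //.
Qed.


Lemma derivn_factor c m F k : (k <= m)%N -> exists H : {poly R},
  (('X - c%:P)^+m * F)^`(k) = ('X - c%:P)^+(m - k) * H /\
  H.[c] = F.[c] * (m ^_ k)%:R.
Proof.
elim: k => [_|k IH Hk].
  by exists F; rewrite subn0 ffactn0 mulr1.
have [H [E1 E2]] := IH (ltnW Hk).
have Em : (m - k = (m - k.+1).+1)%N by rewrite subnSK.
rewrite Em in E1.
exists ((m - k.+1).+1%:R *: H + ('X - c%:P) * H^`()).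
split.
  rewrite derivnS E1 derivM deriv_exp derivXsubC mul1r /=.
  rewrite -mulr_natr exprS.
  rewrite mulrDr; congr (_ + _).
    by rewrite -scalerAr -mulr_natl -mul_polyC; ring.
  by ring.
rewrite !hornerE subrr mul0r addr0 E2 ffactnSr natrM subnSK //.
by ring.
Qed.

Section IpS.
Variables a b : R.

Definition Ip p := (prim p).[b] - (prim p).[a].

Lemma IpD p1 p2 : Ip (p1 + p2) = Ip p1 + Ip p2.
Proof. by rewrite /Ip primD !hornerD; ring. Qed.

Lemma IpZ c p : Ip (c *: p) = c * Ip p.
Proof. by rewrite /Ip primZ !hornerZ; ring. Qed.

Lemma Ip0 : Ip 0 = 0.
Proof. by rewrite -(scale0r (0 : {poly R})) IpZ mul0r. Qed.

Lemma IpN p : Ip (- p) = - Ip p.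
Proof. by rewrite -scaleN1r IpZ mulN1r. Qed.

Lemma IpB p1 p2 : Ip (p1 - p2) = Ip p1 - Ip p2.
Proof. by rewrite IpD IpN. Qed.

Lemma Ip_deriv F : Ip (F^`()) = F.[b] - F.[a].
Proof. by rewrite /Ip prim_deriv !hornerE; ring. Qed.

Lemma Ip_parts u v : Ip (u^`() * v) = (u * v).[b] - (u * v).[a] - Ip (u * v^`()).
Proof.
by rewrite -Ip_deriv derivM IpD; ring.
Qed.


End IpS.

Section Leg.
Variables a b : R.
Local Notation Ip := (Ip a b).

Definition G m : {poly R} := (('X - a%:P) * ('X - b%:P))^+m.
Definition ell m := (G m)^`(m).

Lemma G_split m : G m = ('X - a%:P)^+m * ('X - b%:P)^+m.
Proof. by rewrite /G exprMn. Qed.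

Lemma G_vanish j m : (j < m)%N -> (G m)^`(j).[a] = 0 /\ (G m)^`(j).[b] = 0.
Proof.
move=> jm; split.
  have [H [E _]] := derivn_factor a (('X - b%:P)^+m) (ltnW jm).
  rewrite G_split E hornerM !hornerE subrr expr0n.
  by rewrite subn_eq0 leqNgt jm mul0r.
have [H [E _]] := derivn_factor b (('X - a%:P)^+m) (ltnW jm).
rewrite G_split mulrC E hornerM !hornerE subrr expr0n.
by rewrite subn_eq0 leqNgt jm mul0r.
Qed.

Lemma ibp_iter m h j : (j <= m)%N ->
  Ip (ell m * h) = (-1)^+j * Ip ((G m)^`(m - j) * h^`(j)).
Proof.
elim: j => [_|j IH jm]; first by rewrite expr0 mul1r subn0.
rewrite IH ?(ltnW jm) //.
have Em : (m - j = (m - j.+1).+1)%N by rewrite subnSK.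
rewrite Em derivnS Ip_parts.
have lt : (m - j.+1 < m)%N by lia.
have [Va Vb] := G_vanish lt.
rewrite !hornerM Va Vb !mul0r subrr sub0r -derivnS exprS.
by ring.
Qed.

Lemma ell_orth m h : (size h <= m)%N -> Ip (ell m * h) = 0.
Proof.
move=> hs; rewrite (@ibp_iter m h m) // (derivn_poly0 hs) mulr0.
by rewrite Ip0 mulr0.
Qed.

Lemma derivn_add p i j : p^`(i + j) = (p^`(j))^`(i).
Proof.
elim: i => [|i IH]; first by rewrite add0n.
by rewrite addSn !derivnS IH.
Qed.

Lemma G_monic m : G m \is monic.
Proof. by apply: monic_exp; rewrite monicMl ?monicXsubC. Qed.

Lemma size_G m : size (G m) = (m + m).+1.
Proof.
have nz : G m != 0 by apply: monic_neq0; exact: G_monic.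
rewrite (polySpred nz) (size_exp (('X - a%:P) * ('X - b%:P)) m).
rewrite size_Mmonic ?monicXsubC ?size_XsubC //; last by rewrite -size_poly_eq0 size_XsubC.
by rewrite /= mul2n -addnn.
Qed.

Lemma G_top m : (G m)`_(m + m) = 1.
Proof.
have := G_monic m; move/monicP; rewrite lead_coefE size_G /=.
by [].
Qed.

Lemma G_deriv2m m : (G m)^`(m + m) = ((m + m)`!)%:R%:P.
Proof.
apply/polyP => i; rewrite coef_derivn coefC.
case: i => [|i] /=.
  by rewrite addn0 G_top ffactnn.
move/leq_sizeP: (leqnn (size (G m))) => Z.
rewrite Z ?mul0rn // size_G; lia.
Qed.

Lemma ell_sq m : Ip (ell m * ell m) = (-1)^+m * (m + m)`!%:R * Ip (G m).
Proof.
rewrite (@ibp_iter m (ell m) m) // subnn /ell -derivn_add G_deriv2m.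
by rewrite [_ * _%:P]mulrC mul_polyC IpZ mulrA.
Qed.

Lemma ell_coef m : (ell m)`_m = ((m + m) ^_ m)%:R.
Proof. by rewrite /ell coef_derivn G_top. Qed.

Lemma size_ell m : (size (ell m) <= m.+1)%N.
Proof.
apply/leq_sizeP => j jm; rewrite /ell coef_derivn.
move/leq_sizeP: (leqnn (size (G m))) => Z.
rewrite Z ?mul0rn // size_G; lia.
Qed.

Lemma ell_a m : (ell m).[a] = (m`!)%:R * (a - b)^+m.
Proof.
have [H [E1 E2]] := derivn_factor a (('X - b%:P)^+m) (leqnn m).
rewrite /ell G_split E1 subnn expr0 mul1r E2 !hornerE ffactnn.
by rewrite mulrC.
Qed.

Definition K i j := Ip (('X - a%:P)^+i * ('X - b%:P)^+j).

Lemma K0 n : K n 0 = (b - a)^+n.+1 / n.+1%:R.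
Proof.
rewrite /K expr0 mulr1.
have -> : ('X - a%:P)^+n = ((n.+1%:R)^-1 *: ('X - a%:P)^+n.+1)^`().
  rewrite derivZ deriv_exp derivXsubC mul1r /= -[(_ ^+ n) *+ _]scaler_nat scalerA mulVf ?pnatr_eq0 //.
  by rewrite scale1r.
rewrite Ip_deriv !hornerE subrr expr0n /= mulr0 subr0.
by rewrite mulrC.
Qed.

Lemma KS i j : K i j.+1 = - (j.+1%:R / i.+1%:R) * K i.+1 j.
Proof.
rewrite /K.
have -> : ('X - a%:P)^+i = ((i.+1%:R)^-1 *: ('X - a%:P)^+i.+1)^`().
  rewrite derivZ deriv_exp derivXsubC mul1r /= -[(_ ^+ i) *+ _]scaler_nat scalerA mulVf ?pnatr_eq0 //.
  by rewrite scale1r.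
rewrite Ip_parts !hornerE !subrr !expr0n /= !mulr0 !mul0r subrr sub0r.
rewrite deriv_exp derivXsubC mul1r /= -[(_ ^+ j) *+ _]scaler_nat -scalerAl -scalerAr !IpZ.
by ring.
Qed.

Lemma K_closed i j : K i j * (i + j).+1`!%:R =
  (-1)^+j * (i`! * j`!)%:R * (b - a)^+(i + j).+1.
Proof.
elim: j i => [|j IH] i.
  rewrite K0 addn0 expr0 mul1r fact0 muln1 factS natrM.
  field; by rewrite paddr_eq0 ?oner_eq0 ?ler01 ?ler0n.

have -> : (i + j.+1).+1 = (i.+1 + j).+1 by rewrite addnS addSn.
rewrite (KS i j).
have -> : - (j.+1%:R / i.+1%:R) * K i.+1 j * (i.+1 + j).+1`!%:R =
  - (j.+1%:R / i.+1%:R) * (K i.+1 j * (i.+1 + j).+1`!%:R) by ring.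
rewrite IH factS (factS j) !natrM exprS.
rewrite [(-1)^+j.+1]exprS. field; by rewrite paddr_eq0 ?oner_eq0 ?ler01 ?ler0n.
Qed.


Lemma IpG m : Ip (G m) = K m m.
Proof. by rewrite G_split. Qed.

Lemma ell_norm m : Ip (ell m * ell m) * (m + m).+1%:R =
  (m`!)%:R ^+ 2 * (b - a) ^+ (m + m).+1.
Proof.
have H := K_closed m m.
rewrite ell_sq IpG.
have -> : (-1) ^+ m * (m + m)`!%:R * K m m * (m + m).+1%:R =
   (-1) ^+ m * (K m m * (m + m).+1`!%:R) by rewrite factS natrM; ring.
have s2 : (-1) ^+ m * (-1) ^+ m = 1 :> R by rewrite -exprMn mulrNN mulr1 expr1n.
rewrite H !mulrA s2 mul1r natrM expr2.
by [].
Qed.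

Lemma ell_a_sq m : (ell m).[a] ^+ 2 * (b - a) = (m + m).+1%:R * Ip (ell m * ell m).
Proof.
have s2 : (-1) ^+ m * (-1) ^+ m = 1 :> R by rewrite -exprMn mulrNN mulr1 expr1n.
rewrite [RHS]mulrC ell_norm ell_a exprMn -opprB -mulN1r exprMn.
have s3 : ((-1) ^+ m)^+2 = 1 :> R by rewrite expr2 s2.
rewrite exprMn s3 mul1r -exprM.
rewrite muln2 -addnn [(b - a) ^+ (m + m).+1]exprS; ring.
Qed.

Lemma ell_norm_gt0 m : a < b -> 0 < Ip (ell m * ell m).
Proof.
move=> ab; have H := ell_norm m.
have P : 0 < (m`!)%:R ^+ 2 * (b - a) ^+ (m + m).+1 :> R.
  by rewrite mulr_gt0 // exprn_gt0 // ?subr_gt0 // ltr0n fact_gt0.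
rewrite -H in P.
by rewrite pmulr_lgt0 // in P; rewrite ltr0n.
Qed.

Lemma ell_coef_neq0 m : (ell m)`_m != 0.
Proof. by rewrite ell_coef pnatr_eq0 -lt0n ffact_gt0 leq_addl. Qed.

Lemma Ip_def m h : a < b -> (size h <= m)%N ->
  (forall r : {poly R}, (size r <= m)%N -> Ip (h * r) = 0) -> h = 0.
Proof.
move=> ab; elim: m h => [|m IH] h hs horth.
  by apply/eqP; rewrite -size_poly_eq0 -leqn0.
set c := h`_m / (ell m)`_m.
have Eh : h - c *: ell m = 0.
  apply: IH.
    apply/leq_sizeP => j jm; rewrite coefB coefZ.
    move: jm; rewrite leq_eqVlt => /orP[/eqP <-|jm].
      by rewrite /c mulfVK ?ell_coef_neq0 // subrr.
    move/leq_sizeP: hs => /(_ j jm) ->.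
    by move/leq_sizeP: (size_ell m) => /(_ j jm) ->; rewrite mulr0 subrr.
  move=> r rs; rewrite mulrBl IpB horth; last by apply: leq_trans rs _.
  by rewrite -scalerAl IpZ ell_orth // mulr0 subrr.
have hE : h = c *: ell m by apply/eqP; rewrite -subr_eq0 Eh.
have := horth h hs; rewrite {1 2}hE -scalerAl -scalerAr !IpZ mulrA.
move/eqP; rewrite mulf_eq0 => /orP[|]; last first.
  by move=> /eqP E; move: (ell_norm_gt0 m ab); rewrite E ltxx.
rewrite mulf_eq0 orbb => /eqP c0.
by rewrite hE c0 scale0r.
Qed.

End Leg.
End Alg.

Section An.
Variable R : realType.

Lemma LI (a b : R) (p : {poly R}) : a < b ->
  (\int[@lebesgue_measure R]_(s in `]a, b[) (p.[s])%:E = (Ip a b p)%:E)%E.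
Proof.
move=> ab.
rewrite -(@integral_itv_bndoo _ a b _ true false); last first.
  by apply/measurable_realfun.measurable_EFinP; exact: measurable_poly.
rewrite (@continuous_FTC2 _ (horner p) (horner (prim p))) //.
- by apply: continuous_subspaceT; exact: continuous_horner.
- split.
  + by move=> x _; exact: derivable_horner.
  + by apply: cvg_at_right_filter; exact: continuous_horner.
  + by apply: cvg_at_left_filter; exact: continuous_horner.
- by move=> x _; rewrite -derivE deriv_prim.
Qed.


Lemma Ip_ge0 (a b : R) (p : {poly R}) : a < b ->
  (forall s, a < s < b -> 0 <= p.[s]) -> 0 <= Ip a b p.
Proof.
move=> ab H; rewrite -lee_fin -(LI p ab).
apply: integral_ge0 => x; rewrite /= in_itv /= => Hx.
by rewrite lee_fin H.
Qed.

Import HBNNSimple.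

Lemma int_le_scale d (T : measurableType d) (mu : {measure set T -> \bar R})
  (D : set T) (F G : T -> \bar R) (k : R) : 0 < k ->
  (forall x, D x -> 0 <= F x)%E -> (forall x, D x -> 0 <= G x)%E ->
  (forall x, D x -> F x <= k%:E * G x)%E ->
  (\int[mu]_(x in D) F x <= k%:E * \int[mu]_(x in D) G x)%E.
Proof.
move=> k0 F0 G0 FG.
rewrite [X in (X <= _)%E]ge0_integralE // [X in (_ <= _ * X)%E]ge0_integralE //.
apply: ge_ereal_sup => _ [h hF <-].
have ki0 : 0 <= k^-1 by rewrite invr_ge0 ltW.
pose h' := scale_nnsfun h ki0.
have E : sintegral mu h = (k%:E * sintegral mu h')%E.
  rewrite /h' /scale_nnsfun sintegralrM muleA -EFinM mulfV ?gt_eqF //.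
  by rewrite mul1e.
rewrite E lee_pmul2l ?lte_fin //.
apply: ereal_sup_ubound; exists h' => // x.
rewrite /h' /= /patch.
have := hF x; rewrite /patch.
case: ifPn => xD.
  move=> hx; rewrite inE in xD.
  have H := le_trans hx (FG x xD).
  rewrite EFinM; apply: (le_trans (lee_wpmul2l _ H)); first by rewrite lee_fin.
  by rewrite muleA -EFinM mulVf ?gt_eqF // mul1e.
move=> hx; have h0 : h x = 0.
  by apply/eqP; rewrite eq_le -lee_fin hx /= fun_ge0.
by rewrite h0 mulr0.
Qed.

End An.

Section P.
Variable R : realType.

Lemma size_le_sub (g r : {poly R}) q : (size g <= q.+1)%N -> (size r <= q.+1)%N ->
  g`_q = r`_q -> (size (g - r)%R <= q)%N.
Proof.
move=> gs rs e; apply/leq_sizeP => j; rewrite leq_eqVlt => /orP[/eqP <-|jq].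
  by rewrite coefB e subrr.
rewrite coefB; move/leq_sizeP: gs => /(_ j jq) ->; move/leq_sizeP: rs => /(_ j jq) ->.
by rewrite subrr.
Qed.

Lemma int_poly_eq (a b : R) (f : R -> R) (p : {poly R}) : a < b ->
  (forall s, a < s < b -> f s = p.[s]) ->
  (\int[@lebesgue_measure R]_(s in `]a, b[) (f s)%:E = (Ip a b p)%:E)%E.
Proof.
move=> ab H; rewrite -(LI p ab); apply: eq_integral => s.
by rewrite inE /= in_itv /= => /H ->.
Qed.

Lemma projP_poly (a b : R) (q : nat) (gf : R -> R) (g : {poly R}) :
  a < b -> (size g <= q.+1)%N -> (forall s, a < s < b -> gf s = g.[s]) ->
  projP q a b gf = g - ((g`_q / (ell a b q)`_q) *: ell a b q).
Proof.
move=> ab gs gE.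
set c := g`_q / (ell a b q)`_q.
set r := c *: ell a b q.
have key : forall y r0 : {poly R}, (\int[@lebesgue_measure R]_(s in `]a, b[)
     ((gf s - y.[s]) * r0.[s])%:E)%E = (Ip a b ((g - y) * r0))%:E.
  move=> y r0; apply: int_poly_eq => // s /gE ->.
  by rewrite !hornerE.
have orth : forall r0 : {poly R}, (size r0 <= q)%N -> Ip a b (r * r0) = 0.
  by move=> r0 r0s; rewrite /r -scalerAl IpZ ell_orth // mulr0.
apply: xget_unique.
  split.
    apply: size_le_sub => //; first by apply: leq_trans (size_scale_leq _ _) (size_ell _ _ _).
    by rewrite /r coefZ /c mulfVK // ell_coef_neq0.
  move=> r0 r0s; rewrite key.
  have -> : g - (g - r) = r by ring.
  by rewrite orth.
move=> y [ys yo].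
apply/eqP; rewrite eq_sym -subr_eq0; apply/eqP.
apply: (@Ip_def _ a b q) => //.
  rewrite -opprB size_polyN; apply: size_le_sub => //.
  - by apply: leq_trans ys _.
  - apply: (leq_trans (size_polyD _ _)); rewrite geq_max gs /= size_polyN.
    by apply: leq_trans (size_scale_leq _ _) (size_ell _ _ _).
  - have := leq_sizeP _ _ ys q (leqnn q) => ->.
    by rewrite coefB /r coefZ /c mulfVK ?ell_coef_neq0 // subrr.
move=> r0 r0s.
have := yo r0 r0s; rewrite key => /eqP; rewrite eqe => /eqP H.
have -> : (g - r - y) * r0 = (g - y) * r0 - r * r0 by ring.
by rewrite IpB H orth // subrr.
Qed.


Lemma Ip_sq_ge0 (a b : R) (p : {poly R}) : a < b -> 0 <= Ip a b (p * p).
Proof. by move=> ab; apply: Ip_ge0 => // s _; rewrite hornerM -expr2 sqr_ge0. Qed.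

Lemma size_gr (a b : R) q (g : {poly R}) : (size g <= q.+1)%N ->
  (size (g - (g`_q / (ell a b q)`_q) *: ell a b q)%R <= q)%N.
Proof.
move=> gs; apply: size_le_sub => //.
  by apply: leq_trans (size_scale_leq _ _) (size_ell _ _ _).
by rewrite coefZ mulfVK // ell_coef_neq0.
Qed.

Lemma size_g (a theta lam : R) q (W : {poly R}) : (size W <= q)%N ->
  (size ((theta%:P - lam *: ('X - a%:P)) * W)%R <= q.+1)%N.
Proof.
move=> Ws; apply: leq_trans (size_mul_leq _ _) _.
have h1 : (size (theta%:P - lam *: ('X - a%:P))%R <= 2)%N.
  apply: leq_trans (size_polyD _ _) _; rewrite geq_max size_polyN.
  rewrite (leq_trans (size_polyC_leq1 _)) //=.
  by rewrite (leq_trans (size_scale_leq _ _)) // size_XsubC.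
have : (size (theta%:P - lam *: ('X - a%:P))%R + size W <= 2 + q)%N by rewrite leq_add.
move=> H; rewrite -subn1 leq_subLR add1n; apply: leq_trans H _; lia.
Qed.

Lemma perx (a b theta lam : R) (q : nat) (W : {poly R}) :
  a < b -> 0 <= lam -> (size W <= q)%N ->
  let g := (theta%:P - lam *: ('X - a%:P)) * W in
  let r := (g`_q / (ell a b q)`_q) *: ell a b q in
  [/\ Ip a b (r * r) <= (lam * (b - a))^+2 * Ip a b (W * W),
      (r.[a])^+2 * (b - a) = (q + q).+1%:R * Ip a b (r * r),
      0 <= Ip a b (r * r) & 0 <= Ip a b (W * W)].
Proof.
move=> ab lam0 Ws g r.
have gs : (size g <= q.+1)%N.
  apply: leq_trans (size_mul_leq _ _) _.
  have h1 : (size (theta%:P - lam *: ('X - a%:P))%R <= 2)%N.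
    apply: leq_trans (size_polyD _ _) _; rewrite geq_max size_polyN.
    rewrite (leq_trans (size_polyC_leq1 _)) //=.
    by rewrite (leq_trans (size_scale_leq _ _)) // size_XsubC.
  have : (size (theta%:P - lam *: ('X - a%:P))%R + size W <= 2 + q)%N by rewrite leq_add.
  move=> H; rewrite -subn1 leq_subLR add1n; apply: leq_trans H _; lia.
have orth : forall r0 : {poly R}, (size r0 <= q)%N -> Ip a b (r * r0) = 0.
  by move=> r0 r0s; rewrite /r -scalerAl IpZ ell_orth // mulr0.
set D := g - r - theta *: W.
have Ds : (size D <= q)%N.
  apply: leq_trans (size_polyD _ _) _; rewrite geq_max size_polyN size_gr //=.
  by apply: leq_trans (size_scale_leq _ _) Ws.
set f := lam *: ('X - a%:P) * W.
have Ef : f * f = r * r + (r * D) *+ 2 + D * D.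
  rewrite /D /f /g -!mul_polyC. ring.
have i1 : Ip a b (r * r) <= Ip a b (f * f).
  rewrite Ef !IpD (orth D Ds) addr0 addr0.
  by rewrite lerDl Ip_sq_ge0.
have i2 : Ip a b (f * f) <= (lam * (b - a))^+2 * Ip a b (W * W).
  rewrite -subr_ge0 -IpZ -IpB; apply: Ip_ge0 => // s /andP[s1 s2].
  rewrite /f !(hornerD, hornerN, hornerZ, hornerM, hornerXsubC).
  have h1 : 0 <= s - a by rewrite subr_ge0 ltW.
  have h2 : s - a <= b - a by rewrite lerD2r ltW.
  have : (s - a) ^+ 2 <= (b - a) ^+ 2 by rewrite ler_sqr // ?nnegrE // (le_trans h1 h2).
  move=> h3; rewrite subr_ge0.
  rewrite hornerX hornerC.
  have -> : lam * (s - a) * W.[s] * (lam * (s - a) * W.[s]) = (lam * W.[s]) ^+ 2 * (s - a) ^+ 2 by ring.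
  have -> : (lam * (b - a)) ^+ 2 * (W.[s] * W.[s]) = (lam * W.[s]) ^+ 2 * (b - a) ^+ 2 by ring.
  by rewrite ler_wpM2l // sqr_ge0.
split.
- exact: le_trans i1 i2.
  set cc := g`_q / (ell a b q)`_q.
  have Ra : r.[a] = cc * (ell a b q).[a] by rewrite /r hornerZ.
  have Rr : Ip a b (r * r) = cc * (cc * Ip a b (ell a b q * ell a b q)).
    by rewrite /r -scalerAl -scalerAr !IpZ.
  rewrite Ra Rr.
  have E := ell_a_sq a b q.
  transitivity (cc ^+ 2 * ((ell a b q).[a] ^+ 2 * (b - a))); first by ring.
  rewrite E; ring.
- exact: Ip_sq_ge0.
- exact: Ip_sq_ge0.
Qed.

End P.

Section Dd.
Variable R : realType.

Lemma norm_step (A B : \bar R) (k : R) : 0 < k -> (0 <= A)%E -> (0 <= B)%E ->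
  (A <= (k ^+ 2)%:E * B)%E -> (A `^ 2^-1 <= k%:E * B `^ 2^-1)%E.
Proof.
move=> k0 A0 B0 AB.
have r0 : (0 <= 2^-1 :> R) by rewrite invr_ge0.
apply: (le_trans (gt0_ler_poweR r0 _ _ AB)).
- by rewrite in_itv /= A0 leey.
- by rewrite in_itv /= leey andbT mule_ge0 // lee_fin sqr_ge0.
rewrite poweRM ?lee_fin ?sqr_ge0 // poweR_EFin powR12_sqrt ?sqr_ge0 //.
by rewrite sqrtr_sqr ger0_norm // ltW.
Qed.

Lemma trace_poly d (E : 'rV[R]_d -> R -> R) (a b : R) x (r : {poly R}) :
  a < b -> (forall s, a < s < b -> E x s = r.[s]) -> trace_right E a x = r.[a].
Proof.
move=> ab H; rewrite /trace_right; apply: cvg_lim => //.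
have C := cvg_at_right_filter (@continuous_horner _ r a).
apply: cvg_trans C; apply: near_eq_cvg.
near=> s; apply/esym/H; apply/andP; split; near: s.
  exact: nbhs_right_gt.
exact: nbhs_right_lt.
Unshelve. all: by end_near.
Qed.

End Dd.

Unset Implicit Arguments.
Set Strict Implicit.
Set Printing Implicit Defensive.

Theorem mainTheorem3 (R : realType) (d : nat) (hd : (0 < d)%N)
  (mu : {measure set (Rd R d) -> \bar R}) (hmu : is_lebesgue_Rd mu)
  (Omega : set 'rV[R]_d) (hOmega : bounded_domain Omega)
  (Th : seq ('I_d.+1 -> 'rV[R]_d)) (hTh : simplicial_mesh Omega Th)
  (p : nat) (N : nat) (t : nat -> R) (ht0 : t 0%N = 0)
  (ht : forall m, (m < N)%N -> t m < t m.+1)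
  (q : nat) (hq : (1 <= q)%N) (theta : R)
  (n : nat) (hn : (1 <= n <= N)%N)
  (w : 'rV[R]_d -> R -> R) (hw : inW Omega Th p q N t w)
  (k : nat) (hk : (k < size Th)%N) :
  let tau := t n - t n.-1 in
  let lambda := zeta R q / tau in
  let phi := fun s : R => theta - lambda * (s - t n.-1) in
  let E := resid q (t n.-1) (t n) (fun x s => phi s * w x s) in
  ((L2norm_KI mu (elt Th k) (t n.-1) (t n) E
      <= (zeta R q)%:E * L2norm_KI mu (elt Th k) (t n.-1) (t n) w)%E /\
   (L2norm mu Omega (trace_right E (t n.-1))
      <= (1 / (4 * Num.sqrt (2 * q%:R + 1) * Num.sqrt tau))%:E
         * L2norm_KI mu Omega (t n.-1) (t n) w)%E /\
   1 / (4 * Num.sqrt (2 * q%:R + 1) * Num.sqrt tau) = Num.sqrt lambda / 2).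
Proof.
cbv zeta.
set a := t n.-1; set b := t n.
set tau := b - a; set lambda := zeta R q / tau.
set phi := fun s : R => theta - lambda * (s - a).
set E := resid q a b (fun x s => phi s * w x s).
have ab : a < b.
  move/andP: hn => [h1 h2].
  have := ht n.-1; rewrite prednK //; apply; lia.
have tau0 : 0 < tau by rewrite /tau subr_gt0.
have z0 : 0 < zeta R q by rewrite /zeta mul1r invr_gt0 mulr_gt0 // ltr_wpDl // mulr_ge0 // ler0n.
have lam0 : 0 <= lambda by rewrite /lambda ltW // divr_gt0.
have lamtau : lambda * (b - a) = zeta R q by rewrite /lambda -/tau mulfVK // gt_eqF.
have [v [_ hv]] := hw n hn.
pose W x : {poly R} := \sum_(j < q) v j x *: 'X^j.
have Ws x : (size (W x) <= q)%N.
  apply/leq_sizeP => j jq; rewrite /W coef_sum big1 // => i _.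
  by rewrite coefZ coefXn; case: eqP => [ji|]; [move: (ltn_ord i); lia|rewrite mulr0].
have WE x s : a < s < b -> w x s = (W x).[s].
  move=> Hs; rewrite hv // /W horner_sum; apply: eq_bigr => j _.
  by rewrite hornerZ hornerXn.
pose g x := (theta%:P - lambda *: ('X - a%:P)) * W x.
pose r x := ((g x)`_q / (ell a b q)`_q) *: ell a b q.
have gE x s : a < s < b -> phi s * w x s = (g x).[s].
  move=> Hs; rewrite WE // /g /phi !(hornerM, hornerD, hornerN, hornerZ, hornerXsubC, hornerC).
  by rewrite hornerX.
have EE x s : a < s < b -> E x s = (r x).[s].
  move=> Hs; rewrite /E /resid (projP_poly ab (size_g a theta lambda (Ws x)) (gE x)).
  by rewrite gE // hornerD hornerN; ring.
have IE x : (\int[@lebesgue_measure R]_(s in `]a, b[) ((E x s) ^+ 2)%:E =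
    (Ip a b (r x * r x))%:E)%E.
  by apply: int_poly_eq => // s Hs; rewrite EE // hornerM expr2.
have IW x : (\int[@lebesgue_measure R]_(s in `]a, b[) ((w x s) ^+ 2)%:E =
    (Ip a b (W x * W x))%:E)%E.
  by apply: int_poly_eq => // s Hs; rewrite WE // hornerM expr2.
have PP x := perx theta ab lam0 (Ws x).
have P1 x : Ip a b (r x * r x) <= (zeta R q) ^+ 2 * Ip a b (W x * W x).
  by have [] := PP x; rewrite lamtau.
have P2 x : (r x).[a] ^+ 2 * (b - a) = (q + q).+1%:R * Ip a b (r x * r x).
  by have [] := PP x.
have P3 x : 0 <= Ip a b (r x * r x) by have [] := PP x.
have P4 x : 0 <= Ip a b (W x * W x) by have [] := PP x.
have sq0 : 0 < Num.sqrt (2 * q%:R + 1 : R).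
  by rewrite sqrtr_gt0 ltr_wpDl // mulr_ge0 // ler0n.
have st0 : 0 < Num.sqrt tau by rewrite sqrtr_gt0.
set C := 1 / (4 * Num.sqrt (2 * q%:R + 1) * Num.sqrt tau).
have C0 : 0 < C by rewrite /C mul1r invr_gt0 !mulr_gt0.
have C2 : C ^+ 2 = (2 * q%:R + 1) * (zeta R q) ^+ 2 / tau.
  have q0 : (2 * q%:R + 1 : R) != 0 by rewrite gt_eqF // ltr_wpDl // mulr_ge0 // ler0n.
  rewrite /C /zeta !expr_div_n !exprMn !sqr_sqrtr ?ltW //.
  by field; rewrite q0 gt_eqF.
split; [|split].
- rewrite /L2norm_KI.
  under eq_integral => x _ do rewrite IE.
  under [X in (_ <= _ * X `^ _)%E]eq_integral => x _ do rewrite IW.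
  apply: norm_step => //.
  + by apply: integral_ge0 => x _; rewrite lee_fin.
  + by apply: integral_ge0 => x _; rewrite lee_fin.
  + apply: int_le_scale; rewrite ?exprn_gt0 // => x _; rewrite ?lee_fin //.
- rewrite /L2norm /L2norm_KI.
  under eq_integral => x _ do rewrite (trace_poly ab (EE x)).
  under [X in (_ <= _ * X `^ _)%E]eq_integral => x _ do rewrite IW.
  apply: norm_step => //.
  + by apply: integral_ge0 => x _; rewrite lee_fin sqr_ge0.
  + by apply: integral_ge0 => x _; rewrite lee_fin.
  + apply: int_le_scale; rewrite ?exprn_gt0 // => x _; rewrite ?lee_fin ?sqr_ge0 //.
    rewrite C2.
    have e : (q + q).+1%:R = (2 * q%:R + 1 : R) by rewrite -addn1 !natrD; ring.
    have E2 : (r x).[a] ^+ 2 = (2 * q%:R + 1) * Ip a b (r x * r x) / tau.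
      by rewrite -[LHS](mulfK (lt0r_neq0 tau0)) /tau P2 e.
    rewrite E2 [X in _ <= X](_ : _ = (2 * q%:R + 1) * (zeta R q ^+ 2 * Ip a b (W x * W x)) / tau); last by ring.
    apply: ler_wpM2r; first by rewrite invr_ge0 ltW.
    apply: ler_wpM2l; last exact: P1.
    by rewrite addr_ge0 // mulr_ge0 // ler0n.
- have q0 : (2 * q%:R + 1 : R) != 0 by rewrite gt_eqF // ltr_wpDl // mulr_ge0 // ler0n.
  have L : lambda = (2 * C) ^+ 2.
    rewrite exprMn C2 /lambda /zeta.
    by field; rewrite q0 gt_eqF.
  rewrite L sqrtr_sqr ger0_norm; last by rewrite mulr_ge0 // ltW.
  by field.
Qed.
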